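(* Let $\bm X=X_1\times\cdots\times X_n\in\mathbb{IR}^n$ with $\operatorname{wid}(X_i)>0$ for at least one $i$; define $\mathcal P=\{j:\operatorname{wid}(X_j)>0\}$, $\theta_i=\operatorname{wid}(X_i)/\sum_{j\in\mathcal P}\operatorname{wid}(X_j)$ for $i\in\mathcal P$, $\underline\sigma=\sum_i\underline X_i$, $\overline\sigma=\sum_i\overline X_i$. Let $\varphi:[\underline\sigma,\overline\sigma]\to\mathbb{R}$ be convex and let $\sigma^\ast\in[\underline\sigma,\overline\sigma]$ be a minimizer of $\varphi$ on $[\underline\sigma,\overline\sigma]$. Define, for $i\in\mathcal P$ and $x_i\in X_i$, $$f^{\rm u}_i(x_i)=\varphi\big(\min\{x_i-\overline X_i+\overline\sigma,\sigma^\ast\}\big)+\varphi\big(\max\{x_i-\underline X_i+\underline\sigma,\sigma^\ast\}\big)-(2-\theta_i)\varphi(\sigma^\ast),$$ and $f^{\rm u}_i\equiv 0$ for $i\notin\mathcal P$. Then (i) $\sum_{i=1}^n f^{\rm u}_i(x_i)\le\varphi\big(\sum_{i=1}^n x_i\big)$ for all $\bm x\in\bm X$; and (ii) $\sum_{i=1}^n f^{\rm u}_i(x_i)=\varphi(\sigma^\ast)$ at every $\bm x\in\bm X$ satisfying $x_i\in[\sigma^\ast+\overline X_i-\overline\sigma,\ \sigma^\ast+\underline X_i-\underline\sigma]$ for all $i$.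
   Context: $\mathbb{IR}^n$ is the set of boxes $\bm X=X_1\times\cdots\times X_n$ with $X_i=[\underline X_i,\overline X_i]$ compact real intervals; $\operatorname{wid}(X_i)=\overline X_i-\underline X_i$. *)

(* Defs.v *)
From mathcomp Require Import all_boot all_order all_algebra.
Set Implicit Arguments. Unset Strict Implicit. Unset Printing Implicit Defensive.
Import Order.TTheory GRing.Theory Num.Theory.
Local Open Scope ring_scope.

(* Boxes in IR^n are given by lower/upper endpoint functions lo, hi : 'I_n -> R
   with lo i <= hi i. *)

Definition wid (R : realDomainType) (n : nat) (lo hi : 'I_n -> R) (i : 'I_n) : R :=
  hi i - lo i.

Definition convex_on (R : realFieldType) (a b : R) (phi : R -> R) : Prop :=
  forall x y t : R, a <= x <= b -> a <= y <= b -> 0 <= t <= 1 ->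
    phi (t * x + (1 - t) * y) <= t * phi x + (1 - t) * phi y.

Definition fu (R : realFieldType) (n : nat) (lo hi : 'I_n -> R) (phi : R -> R)
  (sstar : R) (i : 'I_n) (xi : R) : R :=
  let slo := \sum_(j < n) lo j in
  let shi := \sum_(j < n) hi j in
  let W := \sum_(j < n | 0 < wid lo hi j) wid lo hi j in
  let theta := wid lo hi i / W in
  if 0 < wid lo hi i then
    phi (Num.min (xi - hi i + shi) sstar) + phi (Num.max (xi - lo i + slo) sstar)
      - (2 - theta) * phi sstar
  else 0.

(* Main.v *)
Require Import Defs.
From mathcomp Require Import all_boot all_order all_algebra ring lra.
Import Order.TTheory GRing.Theory Num.Theory.
Local Open Scope ring_scope.

Section Aux.
Variable R : realFieldType.

Lemma conv2 (A B m d1 d2 : R) (phi : R -> R) :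
  convex_on A B phi -> A <= m <= B -> A <= m + (d1 + d2) <= B ->
  ((0 <= d1 /\ 0 <= d2) \/ (d1 <= 0 /\ d2 <= 0)) ->
  phi (m + d1) + phi (m + d2) <= phi (m + (d1 + d2)) + phi m.
Proof.
move=> Hc Hm Hx Hs.
have [H0|H0] := eqVneq (d1 + d2) 0.
  have e1 : d1 = 0 by lra.
  have e2 : d2 = 0 by lra.
  by rewrite e1 e2 !addr0.
set t := d1 / (d1 + d2).
have Ht : 0 <= t <= 1.
  rewrite /t; case: Hs => [[h1 h2]|[h1 h2]].
    have hp : 0 < d1 + d2 by rewrite lt_def H0 /=; lra.
    by rewrite divr_ge0 ?ler_pdivrMr //=; lra.
  have hp : d1 + d2 < 0 by rewrite lt_def; apply/andP; split; [rewrite eq_sym|]; lra.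
  by rewrite ler_ndivlMr // ler_ndivrMr //; lra.
have Ht' : 0 <= 1 - t <= 1 by lra.
have E1 : m + d1 = t * (m + (d1 + d2)) + (1 - t) * m by rewrite /t; field.
have E2 : m + d2 = (1 - t) * (m + (d1 + d2)) + (1 - (1 - t)) * m by rewrite /t; field.
have C1 := Hc _ _ _ Hx Hm Ht.
have C2 := Hc _ _ _ Hx Hm Ht'.
rewrite E1 E2. lra.
Qed.

Lemma sum_conv (A B m : R) (phi : R -> R) (I : Type) (r : seq I) (d : I -> R) :
  convex_on A B phi -> A <= m <= B ->
  ((forall i, 0 <= d i) \/ (forall i, d i <= 0)) ->
  A <= m + \sum_(i <- r) d i <= B ->
  \sum_(i <- r) (phi (m + d i) - phi m) <= phi (m + \sum_(i <- r) d i) - phi m.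
Proof.
move=> Hc Hm Hs; elim: r => [|j r IH].
  by rewrite !big_nil addr0 subrr.
rewrite !big_cons => Hb.
set D := \sum_(i <- r) d i in IH Hb *.
have [HD Hsg] : A <= m + D <= B /\ ((0 <= d j /\ 0 <= D) \/ (d j <= 0 /\ D <= 0)).
  case: Hs => Hs.
    have h1 := Hs j. have h2 : 0 <= D by apply: sumr_ge0.
    split; [lra| by left].
  have h1 := Hs j. have h2 : D <= 0 by apply: sumr_le0.
  split; [lra| by right].
have := IH HD. have := @conv2 A B m (d j) D phi Hc Hm Hb Hsg. lra.
Qed.

Lemma mono (A B m y z : R) (phi : R -> R) :
  convex_on A B phi -> A <= m <= B ->
  (forall s, A <= s <= B -> phi m <= phi s) -> A <= y <= B ->
  (m <= z <= y \/ y <= z <= m) -> phi z <= phi y.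
Proof.
move=> Hc Hm Hmin Hy Hz.
have Hmy := Hmin _ Hy.
have [E|E] := eqVneq y m.
  have -> : z = m by lra.
  by rewrite -E.
set t := (z - m) / (y - m).
have Hym : y - m != 0 by rewrite subr_eq0.
have Ht : 0 <= t <= 1.
  rewrite /t; case: Hz => /andP[h1 h2].
    have hp : 0 < y - m by rewrite lt_def Hym /=; lra.
    by rewrite divr_ge0 ?ler_pdivrMr //=; lra.
  have hp : y - m < 0 by rewrite lt_def; apply/andP; split; [rewrite eq_sym|]; lra.
  by rewrite ler_ndivlMr // ler_ndivrMr //; lra.
have Ez : z = t * y + (1 - t) * m by rewrite /t; field.
have C := Hc _ _ _ Hy Hm Ht.
rewrite Ez. nra.
Qed.

Lemma sum_max (I : Type) (r : seq I) (v : I -> R) (c : R) :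
  0 <= c -> (forall i, 0 <= v i) ->
  \sum_(i <- r) Num.max (v i - c) 0 <= Num.max (\sum_(i <- r) v i - c) 0.
Proof.
move=> Hc Hv; elim: r => [|j r IH].
  rewrite !big_nil; case: (leP (0 - c) 0) => h; lra.
rewrite !big_cons.
have h2 : 0 <= \sum_(i <- r) v i by apply: sumr_ge0.
have h1 := Hv j.
move: IH.
case: (leP (v j - c) 0) => a; case: (leP (\sum_(i <- r) v i - c) 0) => b;
case: (leP (v j + \sum_(i <- r) v i - c) 0) => e; lra.
Qed.

Lemma le_sum1 (n : nat) (F : 'I_n -> R) (i : 'I_n) :
  (forall j, 0 <= F j) -> F i <= \sum_j F j.
Proof.
move=> H; rewrite (bigD1 i) //= lerDl; apply: sumr_ge0 => j _; exact: H.
Qed.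

End Aux.

Theorem mainTheorem5 (R : realFieldType) (n : nat) (lo hi : 'I_n -> R)
  (phi : R -> R) (sstar : R) :
  (forall i, lo i <= hi i) ->
  (exists i, 0 < wid lo hi i) ->
  convex_on (\sum_(i < n) lo i) (\sum_(i < n) hi i) phi ->
  (\sum_(i < n) lo i <= sstar <= \sum_(i < n) hi i) ->
  (forall s, \sum_(i < n) lo i <= s <= \sum_(i < n) hi i -> phi sstar <= phi s) ->
  (forall x : 'I_n -> R, (forall i, lo i <= x i <= hi i) ->
     \sum_(i < n) fu lo hi phi sstar i (x i) <= phi (\sum_(i < n) x i))
  /\
  (forall x : 'I_n -> R, (forall i, lo i <= x i <= hi i) ->
     (forall i, sstar + hi i - \sum_(j < n) hi j <= x i
                <= sstar + lo i - \sum_(j < n) lo j) ->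
     \sum_(i < n) fu lo hi phi sstar i (x i) = phi sstar).
Proof.
move=> Hlh [i0 Hi0] Hc Hs Hmin.
set slo := \sum_(i < n) lo i in Hc Hs Hmin *.
set shi := \sum_(i < n) hi i in Hc Hs Hmin *.
set W := \sum_(j < n | 0 < wid lo hi j) wid lo hi j.
have HW : W != 0.
  have : 0 < W.
    rewrite /W (bigD1 i0) //=.
    have : 0 <= \sum_(i < n | (0 < wid lo hi i) && (i != i0)) wid lo hi i.
      apply: sumr_ge0 => i _; rewrite /wid; have := Hlh i; lra.
    lra.
  by rewrite lt_def => /andP[].
have Hth : \sum_(i < n) (if 0 < wid lo hi i then wid lo hi i / W else 0) = 1.
  by rewrite -big_mkcond /= -mulr_suml divff.
have Hdec : forall x : 'I_n -> R, (forall i, lo i <= x i <= hi i) ->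
  \sum_(i < n) fu lo hi phi sstar i (x i) =
  \sum_(i < n) (phi (Num.min (x i - hi i + shi) sstar) - phi sstar)
  + \sum_(i < n) (phi (Num.max (x i - lo i + slo) sstar) - phi sstar)
  + phi sstar.
  move=> x Hx.
  rewrite (eq_bigr (fun i => (phi (Num.min (x i - hi i + shi) sstar) - phi sstar)
     + (phi (Num.max (x i - lo i + slo) sstar) - phi sstar)
     + (if 0 < wid lo hi i then wid lo hi i / W else 0) * phi sstar)).
    by rewrite !big_split /= -mulr_suml Hth mul1r.
  move=> i _; rewrite /fu /= -/slo -/shi -/W.
  case: ifP => hw; first ring.
  move/negbT: hw; rewrite -leNgt /wid => hw.
  have := Hx i; have := Hlh i => h1 h2.
  case: (leP (x i - hi i + shi) sstar) => e1; case: (leP (x i - lo i + slo) sstar) => e2.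
  - have -> : x i - hi i + shi = sstar by lra.
    by rewrite mul0r addr0 !subrr addr0.
  - lra.
  - by rewrite mul0r addr0 !subrr addr0.
  - lra.
split.
- move=> x Hx; rewrite Hdec //.
  set S := \sum_(i < n) x i.
  have HSlo : slo <= S by apply: ler_sum => i _; have := Hx i; lra.
  have HShi : S <= shi by apply: ler_sum => i _; have := Hx i; lra.
  have HSm : slo <= sstar <= shi by [].
  have Hm : slo <= sstar <= shi by [].
  case: (leP sstar S) => hS.
  + have -> : \sum_(i < n) (phi (Num.min (x i - hi i + shi) sstar) - phi sstar) = 0.
      apply: big1 => i _.
      have := @le_sum1 R n (fun j => hi j - x j) i.
      rewrite sumrB -/shi -/S => H.
      have := H (fun j => ltac:(have := Hx j; lra)).
      move=> H2; case: (leP (x i - hi i + shi) sstar) => e; last by rewrite subrr.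
      have -> : x i - hi i + shi = sstar by lra.
      by rewrite subrr.
    pose e i := Num.max ((x i - lo i) - (sstar - slo)) 0.
    rewrite (eq_bigr (fun i => phi (sstar + e i) - phi sstar)); last first.
      move=> i _; rewrite /e.
      case: (leP (x i - lo i + slo) sstar) => e1; case: (leP (x i - lo i - (sstar - slo)) 0) => e2.
      - by rewrite addr0.
      - lra.
      - have -> : x i - lo i + slo = sstar by lra. by rewrite addr0.
      - by congr (phi _ - _); lra.
    have He0 : 0 <= \sum_(i < n) e i.
      apply: sumr_ge0 => i _; rewrite /e; case: (leP (x i - lo i - (sstar - slo)) 0); lra.
    have He1 : \sum_(i < n) e i <= S - sstar.
      have := @sum_max R _ (index_enum 'I_n) (fun i => x i - lo i) (sstar - slo).
      rewrite sumrB -/slo -/S => H.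
      have := H ltac:(lra) (fun j => ltac:(have := Hx j; lra)).
      rewrite -/(e _).
      case: (leP (S - slo - (sstar - slo)) 0) => h; lra.
    have Hpos : forall i, 0 <= e i.
      move=> i; rewrite /e; case: (leP (x i - lo i - (sstar - slo)) 0); lra.
    have C1 := @sum_conv R slo shi sstar phi _ (index_enum 'I_n) e Hc Hm
      (or_introl Hpos) ltac:(lra).
    have C2 := @mono R slo shi sstar S (sstar + \sum_(i < n) e i) phi Hc Hm Hmin ltac:(lra)
      ltac:(left; lra).
    lra.
  + have -> : \sum_(i < n) (phi (Num.max (x i - lo i + slo) sstar) - phi sstar) = 0.
      apply: big1 => i _.
      have := @le_sum1 R n (fun j => x j - lo j) i.
      rewrite sumrB -/slo -/S => H.
      have := H (fun j => ltac:(have := Hx j; lra)).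
      move=> H2; case: (leP (x i - lo i + slo) sstar) => e; first by rewrite subrr.
      lra.
    pose e i := Num.max ((hi i - x i) - (shi - sstar)) 0.
    rewrite (eq_bigr (fun i => phi (sstar + - e i) - phi sstar)); last first.
      move=> i _; rewrite /e.
      case: (leP (x i - hi i + shi) sstar) => e1; case: (leP (hi i - x i - (shi - sstar)) 0) => e2.
      - have -> : x i - hi i + shi = sstar by lra. by rewrite oppr0 addr0.
      - by congr (phi _ - _); lra.
      - by rewrite oppr0 addr0.
      - lra.
    have He0 : 0 <= \sum_(i < n) e i.
      apply: sumr_ge0 => i _; rewrite /e; case: (leP (hi i - x i - (shi - sstar)) 0); lra.
    have He1 : \sum_(i < n) e i <= sstar - S.
      have := @sum_max R _ (index_enum 'I_n) (fun i => hi i - x i) (shi - sstar).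
      rewrite sumrB -/shi -/S => H.
      have := H ltac:(lra) (fun j => ltac:(have := Hx j; lra)).
      rewrite -/(e _).
      case: (leP (shi - S - (shi - sstar)) 0) => h; lra.
    have Hneg : forall i, - e i <= 0.
      move=> i; rewrite /e; case: (leP (hi i - x i - (shi - sstar)) 0); lra.
    have C1 := @sum_conv R slo shi sstar phi _ (index_enum 'I_n) (fun i => - e i) Hc Hm
      (or_intror Hneg) ltac:(rewrite sumrN; lra).
    rewrite sumrN in C1.
    have C2 := @mono R slo shi sstar S (sstar + - \sum_(i < n) e i) phi Hc Hm Hmin ltac:(lra)
      ltac:(right; lra).
    lra.
- move=> x Hx Hx2; rewrite Hdec //.
  rewrite !big1 ?add0r // => i _; have := Hx2 i; rewrite -/slo -/shi => h.
  + case: (leP (x i - lo i + slo) sstar) => e; first by rewrite subrr.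
    lra.
  + case: (leP (x i - hi i + shi) sstar) => e; last by rewrite subrr.
    have -> : x i - hi i + shi = sstar by lra.
      by rewrite subrr.
Qed.
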